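(* Assume $b$ satisfies condition (Cb) for some $\rho\in\mathscr U$ and let $\ell\in\mathbb S^d$. Let $\phi$ be a nonnegative $C^\infty$ function on $\mathbb R^d$ supported in the unit ball with $\int\phi=1$, $\phi_\varepsilon(x):=\varepsilon^{-d}\phi(x/\varepsilon)$, and $b_\varepsilon:=b*\phi_\varepsilon$ for $\varepsilon\in(0,1)$. Then each $b_\varepsilon$ satisfies (Cb) with the same $\rho$, and if $X^\varepsilon_t$ and $X^\ell_t$ solve $X^\varepsilon_t=x_0+\int_0^tb_\varepsilon(X^\varepsilon_s)ds+W_{\ell(t)}$ and $X^\ell_t=x_0+\int_0^tb(X^\ell_s)ds+W_{\ell(t)}$ (driven by the same $W$), then for every $\omega$ and every $t\ge0$, $\lim_{\varepsilon\downarrow0}|X^\varepsilon_t(\omega)-X^\ell_t(\omega)|=0$.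
   Context: Notation: $\|x\|_1:=\sum_j|x_j|$. $\mathscr U$ is the set of continuous non-decreasing functions $\rho:(0,\infty)\to(0,\infty)$ with at most linear growth such that $\int_{0+}\frac{1}{\rho(s)}\,ds=+\infty$. Condition (Cb): $b:\mathbb R^d\to\mathbb R^d$ is continuous and $(x_j-y_j)(b_j(x)-b_j(y))\le|x_j-y_j|\rho(\|x-y\|_1)$ for all $x,y\in\mathbb R^d$, $j=1,\dots,d$. $\mathbb S^d$ is the set of càdlàg $\ell=(\ell_1,\dots,\ell_d):[0,\infty)\to[0,\infty)^d$ with each $\ell_j$ non-decreasing and $\ell_j(0)=0$. $W$ is a standard $d$-dimensional Brownian motion and $W_{\ell(t)}:=(W^1_{\ell_1(t)},\dots,W^d_{\ell_d(t)})$. *)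

(* Defs.v *)
From Stdlib Require Import Reals ClassicalEpsilon.
From mathcomp Require Import ssreflect ssrbool eqtype ssrnat seq fintype bigop.
Set Implicit Arguments. Unset Strict Implicit.
Open Scope R_scope.

Definition pt (d : nat) := 'I_d -> R.

Definition vsub d (x y : pt d) : pt d := fun j => x j - y j.

Definition norm1 d (x : pt d) : R := \big[Rplus/0]_(j < d) Rabs (x j).
Definition norm2 d (x : pt d) : R := sqrt (\big[Rplus/0]_(j < d) (x j * x j)).

Definition upd d (x : pt d) (j : 'I_d) (t : R) : pt d :=
  fun i => if i == j then t else x i.

(* total version of the Riemann integral: the value of RiemannInt whenever
   f is Riemann integrable on [a,b] (default 0 otherwise) *)
Definition RI (f : R -> R) (a b : R) : R :=
  epsilon (inhabits 0) (fun v => exists pr : Riemann_integrable f a b, RiemannInt pr = v).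

Fixpoint iint d (js : seq 'I_d) (f : pt d -> R) (x : pt d) : R :=
  match js with
  | [::] => f x
  | j :: js' => RI (fun t => iint js' f (upd x j t)) (-1) 1
  end.

(* integral of f over the box [-1,1]^d (this equals the integral over R^d
   for the continuous functions supported in the closed unit ball used below) *)
Definition box_int d (f : pt d -> R) : R := iint (enum 'I_d) f (fun _ => 0).

Definition contR d (f : pt d -> R) : Prop :=
  forall x eps, 0 < eps -> exists del, 0 < del /\
    forall y, norm1 (vsub y x) < del -> Rabs (f y - f x) < eps.

Fixpoint Ck d (k : nat) (f : pt d -> R) : Prop :=
  contR f /\
  match k with
  | O => True
  | S k' => forall j : 'I_d, exists g : pt d -> R,
      (forall x, derivable_pt_lim (fun t => f (upd x j t)) (x j) (g x)) /\ Ck k' g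
  end.

Definition smooth d (f : pt d -> R) : Prop := forall k, Ck k f.

Definition class_U (rho : R -> R) : Prop :=
  (forall s, 0 < s -> 0 < rho s) /\
  (forall s, 0 < s -> continuity_pt rho s) /\
  (forall s t, 0 < s -> s <= t -> rho s <= rho t) /\
  (exists C, forall s, 0 < s -> rho s <= C * (1 + s)) /\
  (* int_{0+} 1/rho = +infinity *)
  (forall M, exists d0, 0 < d0 < 1 /\
     forall del, 0 < del <= d0 -> M <= RI (fun s => / rho s) del 1).

Definition Cb d (rho : R -> R) (b : pt d -> pt d) : Prop :=
  (forall j, contR (fun x => b x j)) /\
  (forall (x y : pt d) (j : 'I_d),
     (x j - y j) * (b x j - b y j) <= Rabs (x j - y j) * rho (norm1 (vsub x y))).

Definition in_Sd d (ell : 'I_d -> R -> R) : Prop :=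
  forall j : 'I_d,
    ell j 0 = 0 /\
    (forall s t, 0 <= s -> s <= t -> ell j s <= ell j t) /\
    (forall t, 0 <= t -> forall eps, 0 < eps -> exists del, 0 < del /\
        forall s, t <= s < t + del -> Rabs (ell j s - ell j t) < eps) /\
    (forall t, 0 < t -> exists L, forall eps, 0 < eps -> exists del, 0 < del /\
        forall s, t - del < s < t -> Rabs (ell j s - L) < eps).

(* a (sample) path of d-dim Brownian motion: continuous on [0,oo), started at 0 *)
Definition bm_path d (w : 'I_d -> R -> R) : Prop :=
  forall j : 'I_d,
    w j 0 = 0 /\
    (forall t, 0 <= t -> forall eps, 0 < eps -> exists del, 0 < del /\
        forall s, 0 <= s -> Rabs (s - t) < del -> Rabs (w j s - w j t) < eps).

Definition mollifier d (phi : pt d -> R) : Prop :=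
  smooth phi /\ (forall x, 0 <= phi x) /\
  (forall x, phi x <> 0 -> norm2 x <= 1) /\ box_int phi = 1.

Definition phi_eps d (phi : pt d -> R) (eps : R) (x : pt d) : R :=
  / (eps ^ d) * phi (fun j => x j / eps).

Definition b_eps d (phi : pt d -> R) (b : pt d -> pt d) (eps : R) : pt d -> pt d :=
  fun x j => box_int (fun y => b (vsub x y) j * phi_eps phi eps y).

Definition solves d (b : pt d -> pt d) (x0 : pt d) (w : 'I_d -> R -> R)
    (ell : 'I_d -> R -> R) (X : R -> pt d) : Prop :=
  forall t, 0 <= t -> forall j : 'I_d,
    exists pr : Riemann_integrable (fun s => b (X s) j) 0 t,
      X t j = x0 j + RiemannInt pr + w j (ell j t).

(* Main.v *)
Require Import Defs.
From Stdlib Require Import Reals Lra Lia ClassicalEpsilon Classical FunctionalExtensionality.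
From mathcomp Require Import ssreflect ssrfun ssrbool eqtype ssrnat seq fintype bigop.
From Coquelicot Require Import Coquelicot.
From HB Require Import structures.
Open Scope R_scope.
Set Implicit Arguments. Unset Strict Implicit.

Lemma Rplus_assoc' : ssrfun.associative Rplus.
Proof. move=> a b c; by rewrite Rplus_assoc. Qed.
Lemma Rplus_comm' : ssrfun.commutative Rplus.
Proof. move=> a b; exact: Rplus_comm. Qed.
Lemma Rplus_0_l' : ssrfun.left_id 0 Rplus.
Proof. move=> a; exact: Rplus_0_l. Qed.
#[warnings="-HB.no-new-instance"] HB.instance Definition _ := Monoid.isComLaw.Build R 0 Rplus Rplus_assoc' Rplus_comm' Rplus_0_l'.

Lemma big_Rle (I : finType) (f g : I -> R) :
  (forall j, f j <= g j) -> \big[Rplus/0]_(j : I) f j <= \big[Rplus/0]_(j : I) g j.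
Proof.
move=> H; apply: (big_ind2 (fun a b => a <= b)); first lra.
- move=> ????; lra.
- move=> i _; exact: H.
Qed.

Lemma big_Rconst d (c : R) : \big[Rplus/0]_(j < d) c = INR d * c.
Proof.
elim: d => [|d IH]; first by rewrite big_ord0 /=; lra.
rewrite big_ord_recr IH S_INR /=; lra.
Qed.

Lemma big_Rscal (I : finType) (c : R) (f : I -> R) :
  \big[Rplus/0]_(j : I) (c * f j) = c * \big[Rplus/0]_(j : I) f j.
Proof.
symmetry; apply: (big_morph (fun v => c * v)) => //.
- move=> a b; lra.
- lra.
Qed.

Lemma big_Rge0 (I : finType) (f : I -> R) :
  (forall j, 0 <= f j) -> 0 <= \big[Rplus/0]_(j : I) f j.
Proof.
move=> H; apply: (big_ind (fun a => 0 <= a)); first lra.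
- move=> ???; lra.
- move=> i _; exact: H.
Qed.

Lemma big_Rsingle (I : finType) (f : I -> R) (j : I) :
  (forall i, 0 <= f i) -> f j <= \big[Rplus/0]_(i : I) f i.
Proof.
move=> H; rewrite (bigD1 j) //=.
have : 0 <= \big[Rplus/0]_(i | i != j) f i.
  apply: (big_ind (fun a => 0 <= a)); first lra.
  - move=> ???; lra.
  - move=> i _; exact: H.
lra.
Qed.

Lemma norm1_ge0 d (x : pt d) : 0 <= norm1 x.
Proof. apply: big_Rge0 => j; exact: Rabs_pos. Qed.

Lemma coord_le_norm1 d (x : pt d) j : Rabs (x j) <= norm1 x.
Proof. rewrite /norm1; apply: (@big_Rsingle _ (fun i => Rabs (x i))) => i; exact: Rabs_pos. Qed.

Lemma norm1_bound d (x : pt d) M : (forall j, Rabs (x j) <= M) -> norm1 x <= INR d * M.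
Proof. move=> H; rewrite -big_Rconst; exact: big_Rle. Qed.

Lemma norm1_ext d (x y : pt d) : (forall j, x j = y j) -> norm1 x = norm1 y.
Proof. move=> H; apply: eq_bigr => i _; by rewrite H. Qed.

Lemma norm1_add d (x y : pt d) : norm1 (fun j => x j + y j) <= norm1 x + norm1 y.
Proof.
rewrite /norm1 -big_split /=; apply: big_Rle => j; exact: Rabs_triang.
Qed.

Lemma norm1_tri d (x y z : pt d) :
  norm1 (vsub x z) <= norm1 (vsub x y) + norm1 (vsub y z).
Proof.
have H := norm1_add (vsub x y) (vsub y z).
have E : norm1 (vsub x z) = norm1 (fun j => vsub x y j + vsub y z j)
  by apply: norm1_ext => j; rewrite /vsub; ring.
lra.
Qed.

Lemma norm1_sym d (x y : pt d) : norm1 (vsub x y) = norm1 (vsub y x).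
Proof. apply: eq_bigr => j _; rewrite /vsub; apply: Rabs_minus_sym. Qed.

Lemma norm1_vsub_le d (x y : pt d) : norm1 x <= norm1 y + norm1 (vsub x y).
Proof.
have H := norm1_add y (vsub x y).
have E : norm1 x = norm1 (fun j => y j + vsub x y j)
  by apply: norm1_ext => j; rewrite /vsub; ring.
lra.
Qed.

Lemma norm1_zero d : norm1 (fun _ : 'I_d => 0) = 0.
Proof. rewrite /norm1 big1 // => i _; exact: Rabs_R0. Qed.

Lemma norm1_upd d (x : pt d) j t s :
  norm1 (vsub (upd x j t) (upd x j s)) = Rabs (t - s).
Proof.
rewrite /norm1 (bigD1 j) //= big1 /vsub /upd ?eqxx; first lra.
move=> i /negbTE ->; rewrite Rminus_eq_0; exact: Rabs_R0.
Qed.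

Lemma norm1_upd2 d (x y : pt d) j t :
  norm1 (vsub (upd x j t) (upd y j t)) <= norm1 (vsub x y).
Proof.
apply: big_Rle => i; rewrite /vsub /upd; case: (i == j).
- rewrite Rminus_eq_0 Rabs_R0; exact: Rabs_pos.
- lra.
Qed.

Lemma norm1_upd_le d (x : pt d) j t : norm1 (upd x j t) <= norm1 x + Rabs t.
Proof.
have E1 : norm1 (upd x j t) = Rabs t + \big[Rplus/0]_(i < d | i != j) Rabs (x i).
  rewrite /norm1 (bigD1 j) //= /upd eqxx; congr (_ + _).
  by apply: eq_bigr => i /negbTE ->.
have E2 : norm1 x = Rabs (x j) + \big[Rplus/0]_(i < d | i != j) Rabs (x i).
  by rewrite /norm1 (bigD1 j).
have := Rabs_pos (x j); lra.
Qed.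

Lemma coord_le_norm2 d (x : pt d) j : Rabs (x j) <= norm2 x.
Proof.
rewrite /norm2 -sqrt_Rsqr_abs; apply: sqrt_le_1_alt.
rewrite /Rsqr; apply: (@big_Rsingle _ (fun i => x i * x i)) => i.
apply: Rle_0_sqr.
Qed.

Lemma norm2_le_norm1 d (x : pt d) : norm2 x <= norm1 x.
Proof.
rewrite /norm2; have H0 := norm1_ge0 x.
rewrite -(sqrt_Rsqr (norm1 x)) //; apply: sqrt_le_1_alt.
rewrite /Rsqr {2}/norm1 -big_Rscal; apply: big_Rle => j.
have := coord_le_norm1 x j; have := Rabs_pos (x j).
have E : x j * x j = Rabs (x j) * Rabs (x j).
  by rewrite -Rabs_mult Rabs_pos_eq //; apply: Rle_0_sqr.
rewrite E; nra.
Qed.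

Lemma fc_pos d (P : 'I_d -> R -> Prop) :
  (forall j e e', 0 < e' <= e -> P j e -> P j e') ->
  (forall j, exists e, 0 < e /\ P j e) -> exists e, 0 < e /\ forall j, P j e.
Proof.
move=> Hm H.
suff : forall l : seq 'I_d, exists e, 0 < e /\ forall j, j \in l -> P j e.
  case/(_ (enum 'I_d)) => e [He H']; exists e; split => // j.
  by apply: H'; rewrite mem_enum.
elim => [|j l [e1 [He1 IH]]]; first by exists 1; split => //; lra.
case: (H j) => e2 [He2 Hj].
exists (Rmin e1 e2); split; first by apply: Rmin_pos.
move=> i; rewrite in_cons => /orP [/eqP -> | Hi].
- apply: Hm Hj; split; [exact: Rmin_pos | exact: Rmin_r].
- apply: Hm (IH _ Hi); split; [exact: Rmin_pos | exact: Rmin_l].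
Qed.

Lemma fc_big d (P : 'I_d -> R -> Prop) :
  (forall j M M', M <= M' -> P j M -> P j M') ->
  (forall j, exists M, P j M) -> exists M, forall j, P j M.
Proof.
move=> Hm H.
suff : forall l : seq 'I_d, exists M, forall j, j \in l -> P j M.
  case/(_ (enum 'I_d)) => M H'; exists M => j.
  by apply: H'; rewrite mem_enum.
elim => [|j l [M1 IH]]; first by exists 0.
case: (H j) => M2 Hj.
exists (Rmax M1 M2).
move=> i; rewrite in_cons => /orP [/eqP -> | Hi].
- apply: Hm Hj; exact: Rmax_r.
- apply: Hm (IH _ Hi); exact: Rmax_l.
Qed.

Lemma fc_nat d (P : 'I_d -> nat -> Prop) :
  (forall j, exists N, forall n, (N <= n)%N -> P j n) ->
  exists N, forall j n, (N <= n)%N -> P j n.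
Proof.
move=> H.
suff : forall l : seq 'I_d, exists N, forall j, j \in l -> forall n, (N <= n)%N -> P j n.
  case/(_ (enum 'I_d)) => N H'; exists N => j.
  by apply: H'; rewrite mem_enum.
elim => [|j l [N1 IH]]; first by exists 0%N.
case: (H j) => N2 Hj.
exists (maxn N1 N2).
move=> i; rewrite in_cons => /orP [/eqP -> | Hi] n Hn.
- apply: Hj; apply: leq_trans Hn; exact: leq_maxr.
- apply: IH => //; apply: leq_trans Hn; exact: leq_maxl.
Qed.

Definition ct1 (g : R -> R) := forall a e, 0 < e -> exists del, 0 < del /\
  forall b, Rabs (b - a) < del -> Rabs (g b - g a) < e.

Lemma contR_const d (c : R) : contR (fun _ : pt d => c).
Proof. move=> x e He; exists 1; split; first lra. move=> y _; rewrite Rminus_eq_0 Rabs_R0; lra. Qed.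

Lemma contR_coord d (j : 'I_d) : contR (fun x : pt d => x j).
Proof.
move=> x e He; exists e; split => // y Hy.
apply: Rle_lt_trans Hy; exact: (coord_le_norm1 (vsub y x) j).
Qed.

Lemma contR_plus d (f g : pt d -> R) : contR f -> contR g -> contR (fun x => f x + g x).
Proof.
move=> Hf Hg x e He.
case: (Hf x (e/2)) => [|d1 [Hd1 H1]]; first lra.
case: (Hg x (e/2)) => [|d2 [Hd2 H2]]; first lra.
exists (Rmin d1 d2); split; first exact: Rmin_pos.
move=> y Hy.
have := H1 y (Rlt_le_trans _ _ _ Hy (Rmin_l _ _)).
have := H2 y (Rlt_le_trans _ _ _ Hy (Rmin_r _ _)).
move=> A B.
have -> : f y + g y - (f x + g x) = (f y - f x) + (g y - g x) by ring.
apply: Rle_lt_trans (Rabs_triang _ _) _; lra.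
Qed.

Lemma contR_mult d (f g : pt d -> R) : contR f -> contR g -> contR (fun x => f x * g x).
Proof.
move=> Hf Hg x e He.
set A := Rabs (f x) + 1. set B := Rabs (g x) + 1.
have HA : 0 < A by have := Rabs_pos (f x); rewrite /A; lra.
have HB : 0 < B by have := Rabs_pos (g x); rewrite /B; lra.
case: (Hf x (Rmin 1 (e / (2 * B)))) => [|d1 [Hd1 H1]].
  apply: Rmin_pos; first lra. apply: Rdiv_lt_0_compat; lra.
case: (Hg x (e / (2 * A))) => [|d2 [Hd2 H2]].
  apply: Rdiv_lt_0_compat; lra.
exists (Rmin d1 d2); split; first exact: Rmin_pos.
move=> y Hy.
have F := H1 y (Rlt_le_trans _ _ _ Hy (Rmin_l _ _)).
have G := H2 y (Rlt_le_trans _ _ _ Hy (Rmin_r _ _)).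
have F1 : Rabs (f y - f x) < 1 by apply: Rlt_le_trans F (Rmin_l _ _).
have F2 : Rabs (f y - f x) < e / (2 * B) by apply: Rlt_le_trans F (Rmin_r _ _).
have Hfy : Rabs (f y) <= A.
  have := Rabs_triang_inv (f y) (f x); rewrite /A; lra.
have -> : f y * g y - f x * g x = f y * (g y - g x) + g x * (f y - f x) by ring.
apply: Rle_lt_trans (Rabs_triang _ _) _.
rewrite !Rabs_mult.
set p := e / (2 * A) in G *. set q := e / (2 * B) in F2 *.
have E1 : A * p = e / 2 by rewrite /p; field; lra.
have E2 : B * q = e / 2 by rewrite /q; field; lra.
have Hgx : Rabs (g x) <= B by rewrite /B; lra.
have P1 := Rabs_pos (f y). have P2 := Rabs_pos (g y - g x).
have P3 := Rabs_pos (g x). have P4 := Rabs_pos (f y - f x).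
nra.
Qed.

Lemma contR_comp1 d (f : pt d -> R) (g : R -> R) : contR f -> ct1 g -> contR (fun x => g (f x)).
Proof.
move=> Hf Hg x e He.
case: (Hg (f x) e He) => d1 [Hd1 H1].
case: (Hf x d1 Hd1) => d2 [Hd2 H2].
exists d2; split => // y Hy; exact: H1 (H2 y Hy).
Qed.

Lemma contR_precomp d (f : pt d -> R) (A : pt d -> pt d) L :
  contR f -> 0 < L -> (forall x y, norm1 (vsub (A y) (A x)) <= L * norm1 (vsub y x)) ->
  contR (fun x => f (A x)).
Proof.
move=> Hf HL HA x e He.
case: (Hf (A x) e He) => d1 [Hd1 H1].
exists (d1 / L); split; first by apply: Rdiv_lt_0_compat.
move=> y Hy; apply: H1; apply: Rle_lt_trans (HA x y) _.
have -> : d1 = L * (d1 / L) by field; lra.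
apply: Rmult_lt_compat_l => //.
Qed.

Lemma cont1_abs : ct1 Rabs.
Proof.
move=> a e He; exists e; split => // b Hb.
apply: Rle_lt_trans (Rabs_triang_inv2 _ _) Hb.
Qed.

Lemma contR_abs d (f : pt d -> R) : contR f -> contR (fun x => Rabs (f x)).
Proof. move=> Hf; exact: contR_comp1 Hf cont1_abs. Qed.

Lemma contR_line d (f : pt d -> R) (x : pt d) j :
  contR f -> ct1 (fun t => f (upd x j t)).
Proof.
move=> Hf a e He.
case: (Hf (upd x j a) e He) => del [Hd H].
exists del; split => // b Hb; apply: H; by rewrite norm1_upd.
Qed.

Lemma cont1_continuous (g : R -> R) a :
  (forall e, 0 < e -> exists del, 0 < del /\ forall b, Rabs (b - a) < del -> Rabs (g b - g a) < e) ->
  continuous g a.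
Proof.
move=> H; apply/filterlim_locally => eps.
case: (H eps (cond_pos eps)) => del [Hd H'].
exists (mkposreal del Hd) => y Hy; apply: H'; exact: Hy.
Qed.

Lemma cont1_continuity_pt (g : R -> R) a :
  (forall e, 0 < e -> exists del, 0 < del /\ forall b, Rabs (b - a) < del -> Rabs (g b - g a) < e) ->
  continuity_pt g a.
Proof.
move=> H e He.
case: (H e He) => del [Hd H'].
exists del; split => // y [_ Hy]; exact: H' Hy.
Qed.

Definition sincr (phi : nat -> nat) := forall n, (phi n < phi n.+1)%N.

Lemma sincr_lt phi : sincr phi -> forall a b, (a < b)%N -> (phi a < phi b)%N.
Proof.
move=> H a b; elim: b => [//|b IH].
rewrite ltnS leq_eqVlt => /orP [/eqP -> | Hab]; first exact: H.
apply: ltn_trans (IH Hab) (H b).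
Qed.

Lemma sincr_ge phi : sincr phi -> forall n, (n <= phi n)%N.
Proof.
move=> H; elim => [//|n IH]; apply: leq_ltn_trans IH (H n).
Qed.

Lemma sincr_comp phi psi : sincr phi -> sincr psi -> sincr (fun n => phi (psi n)).
Proof. move=> H1 H2 n; apply: sincr_lt => //; exact: H2. Qed.

Lemma small_inv e : 0 < e -> exists N : nat, forall n, (N <= n)%N -> / (INR n + 1) < e.
Proof.
move=> He; case: (archimed_cor1 e He) => N [HN HN0].
exists N => n Hn.
have HNpos : 0 < INR N by apply: lt_0_INR; exact: HN0.
have : INR N <= INR n by apply: le_INR; apply/leP; exact: Hn.
move=> Hle.
apply: Rle_lt_trans HN; apply: Rinv_le_contravar => //; lra.
Qed.

Lemma bw1 (v : nat -> R) M : (forall n, Rabs (v n) <= M) ->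
  exists psi l, sincr psi /\ forall e, 0 < e -> exists N, forall n, (N <= n)%N -> Rabs (v (psi n) - l) < e.
Proof.
move=> Hb.
case: (Bolzano_Weierstrass v (fun c => -M <= c <= M) (compact_P3 (-M) M)).
  move=> n; have := Hb n; move/Rabs_le_between; lra.
move=> l Hl.
have H : forall N k, exists p, (N <= p)%N /\ Rabs (v p - l) < / (INR k + 1).
  move=> N k.
  have Hk : 0 < / (INR k + 1) by apply: Rinv_0_lt_compat; have := pos_INR k; lra.
  case: (Hl (disc l (mkposreal _ Hk)) N).
    by exists (mkposreal _ Hk) => y.
  move=> p [/leP Hp Hv]; exists p; split => //.
pose ch N k := proj1_sig (constructive_indefinite_description _ (H N k)).
have Hch : forall N k, (N <= ch N k)%N /\ Rabs (v (ch N k) - l) < / (INR k + 1).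
  move=> N k; rewrite /ch; case: constructive_indefinite_description => //.
pose psi := fix f n := match n with 0%N => ch 0%N 0%N | S m => ch (S (f m)) (S m) end.
have Hpsi : forall n, Rabs (v (psi n) - l) < / (INR n + 1).
  case => [|n] /=; [exact: (proj2 (Hch _ _)) | exact: (proj2 (Hch _ _))].
exists psi, l; split.
  move=> n /=; exact: (proj1 (Hch _ _)).
move=> e He; case: (small_inv He) => N HN; exists N => n Hn.
apply: Rlt_trans (Hpsi n) (HN n Hn).
Qed.

Lemma bw d (u : nat -> pt d) M : (forall n j, Rabs (u n j) <= M) ->
  exists phi (L : pt d), sincr phi /\ forall j e, 0 < e ->
    exists N, forall n, (N <= n)%N -> Rabs (u (phi n) j - L j) < e.
Proof.
move=> Hb.
suff : forall l : seq 'I_d, exists phi (L : pt d), sincr phi /\ forall j, j \in l -> forall e, 0 < e ->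
    exists N, forall n, (N <= n)%N -> Rabs (u (phi n) j - L j) < e.
  case/(_ (enum 'I_d)) => phi [L [H1 H2]]; exists phi, L; split => // j.
  by apply: H2; rewrite mem_enum.
elim => [|j l [phi [L [Hphi IH]]]].
  by exists (fun n : nat => n), (fun _ => 0); split.
case: (bw1 (v := fun n => u (phi n) j) (M := M)) => [n|psi [lj [Hpsi Hc]]]; first exact: Hb.
exists (fun n => phi (psi n)), (upd L j lj); split; first exact: sincr_comp.
move=> i; rewrite in_cons => Hi e He.
case: (eqVneq i j) => [-> | Hij].
- case: (Hc e He) => N HN; exists N => n Hn; rewrite /upd eqxx; exact: HN.
- move: Hi; rewrite (negbTE Hij) /= => Hi.
  case: (IH i Hi e He) => N HN; exists N => n Hn.
  rewrite /upd (negbTE Hij).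
  apply: HN; apply: leq_trans Hn _; exact: sincr_ge.
Qed.

Lemma heine d (f : pt d -> R) : contR f -> forall M e, 0 < e -> exists del, 0 < del /\
  forall x y, norm1 x <= M -> norm1 y <= M -> norm1 (vsub x y) < del -> Rabs (f x - f y) < e.
Proof.
move=> Hf M e He.
apply: NNPP => Hn.
have H : forall n : nat, exists xy : pt d * pt d, norm1 xy.1 <= M /\ norm1 xy.2 <= M /\
   norm1 (vsub xy.1 xy.2) < / (INR n + 1) /\ e <= Rabs (f xy.1 - f xy.2).
  move=> n; apply: NNPP => Hn2; apply: Hn.
  exists (/ (INR n + 1)); split.
    apply: Rinv_0_lt_compat; have := pos_INR n; lra.
  move=> x y Hx Hy Hxy; apply: Rnot_le_lt => Hle; apply: Hn2; by exists (x, y).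
pose xy n := proj1_sig (constructive_indefinite_description _ (H n)).
have Hxy : forall n, norm1 (xy n).1 <= M /\ norm1 (xy n).2 <= M /\
   norm1 (vsub (xy n).1 (xy n).2) < / (INR n + 1) /\ e <= Rabs (f (xy n).1 - f (xy n).2).
  move=> n; rewrite /xy; case: constructive_indefinite_description => //.
case: (bw (u := fun n => (xy n).1) (M := M)).
  move=> n j; apply: Rle_trans (coord_le_norm1 _ j) _; exact: (proj1 (Hxy n)).
move=> phi [L [Hphi Hc]].
case: (Hf L (e/2)) => [|del [Hdel HL]]; first lra.
have Hd1 : 0 < INR d + 1 by have := pos_INR d; lra.
case: (fc_nat (P := fun j n => Rabs ((xy (phi n)).1 j - L j) < del / 2 / (INR d + 1))).
  move=> j; apply: Hc; apply: Rdiv_lt_0_compat => //; lra.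
move=> N1 HN1.
case: (small_inv (e := del / 2)) => [|N2 HN2]; first lra.
set n := maxn N1 N2.
have Hx : norm1 (vsub (xy (phi n)).1 L) < del / 2.
  have : norm1 (vsub (xy (phi n)).1 L) <= INR d * (del / 2 / (INR d + 1)).
    apply: norm1_bound => j; apply: Rlt_le; apply: HN1; exact: leq_maxl.
  have : INR d * (del / 2 / (INR d + 1)) < del / 2.
    have -> : INR d * (del / 2 / (INR d + 1)) = del / 2 * (INR d / (INR d + 1)) by field; lra.
    have : INR d / (INR d + 1) < 1.
      apply/Rlt_div_l; lra.
    nra.
  lra.
have Hxy2 : norm1 (vsub (xy (phi n)).1 (xy (phi n)).2) < del / 2.
  apply: Rlt_trans (proj1 (proj2 (proj2 (Hxy (phi n))))) _.
  apply: HN2; apply: leq_trans (sincr_ge Hphi n); exact: leq_maxr.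
have Hy : norm1 (vsub (xy (phi n)).2 L) < del.
  have := norm1_tri (xy (phi n)).2 (xy (phi n)).1 L.
  rewrite (norm1_sym (xy (phi n)).2 (xy (phi n)).1); lra.
have A1 := HL _ (Rlt_trans _ _ _ Hx (ltac:(lra) : del / 2 < del)).
have A2 := HL _ Hy.
have A3 := proj2 (proj2 (proj2 (Hxy (phi n)))).
have : Rabs (f (xy (phi n)).1 - f (xy (phi n)).2) <= Rabs (f (xy (phi n)).1 - f L) + Rabs (f (xy (phi n)).2 - f L).
  rewrite (Rabs_minus_sym (f (xy (phi n)).2)).
  have -> : f (xy (phi n)).1 - f (xy (phi n)).2 = (f (xy (phi n)).1 - f L) + (f L - f (xy (phi n)).2) by ring.
  exact: Rabs_triang.
lra.
Qed.

Lemma RI_RInt (f : R -> R) a b : ex_RInt f a b -> RI f a b = RInt f a b.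
Proof.
move=> H; have pr := ex_RInt_Reals_0 _ _ _ H.
rewrite /RI.
have Hex : exists v, exists pr : Riemann_integrable f a b, RiemannInt pr = v by exists (RiemannInt pr), pr.
case: (epsilon_spec (inhabits 0) _ Hex) => pr' <-.
by rewrite (RInt_Reals _ _ _ pr').
Qed.

Lemma RInt_close (F G : R -> R) a b c : a <= b -> ex_RInt F a b -> ex_RInt G a b ->
  (forall t, a <= t <= b -> Rabs (F t - G t) <= c) ->
  Rabs (RInt F a b - RInt G a b) <= (b - a) * c.
Proof.
move=> Hab HF HG H.
have E : RInt F a b - RInt G a b = RInt (fun t => F t - G t) a b.
  by rewrite (RInt_minus F G a b HF HG).
rewrite E; apply: abs_RInt_le_const => //.
exact: (ex_RInt_minus F G a b HF HG).
Qed.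

Lemma ex_RInt_line d (h : pt d -> R) x j a b : contR h ->
  ex_RInt (fun t => h (upd x j t)) a b.
Proof.
move=> Hh; apply: ex_RInt_continuous => z _.
apply: cont1_continuous => e He; exact: contR_line Hh z e He.
Qed.

Lemma iint_cont d (f : pt d -> R) js : contR f -> contR (iint js f).
Proof.
move=> Hf; elim: js => [//|j js IH] /=.
move=> x0 e He.
case: (heine IH (norm1 x0 + 2) (e := e / 4)) => [|del [Hdel H]]; first lra.
exists (Rmin del 1); split; first by apply: Rmin_pos; lra.
move=> y Hy.
rewrite !RI_RInt; try exact: ex_RInt_line.
apply: Rle_lt_trans (RInt_close (c := e / 4) _ _ _ _) _.
- lra.
- exact: ex_RInt_line.
- exact: ex_RInt_line.
- move=> t Ht; apply: Rlt_le; apply: H.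
  + apply: Rle_trans (norm1_upd_le _ _ _) _.
    have := norm1_vsub_le y x0; have := Rmin_r del 1.
    have : Rabs t <= 1 by apply: Rabs_le; lra.
    lra.
  + apply: Rle_trans (norm1_upd_le _ _ _) _.
    have : Rabs t <= 1 by apply: Rabs_le; lra.
    lra.
  + apply: Rle_lt_trans (norm1_upd2 _ _ _ _) _.
    apply: Rlt_le_trans Hy (Rmin_l _ _).
- lra.
Qed.

Lemma iint_ext d (f g : pt d -> R) js x : (forall z, f z = g z) -> iint js f x = iint js g x.
Proof. move=> H; have -> // : f = g; exact: functional_extensionality. Qed.

Lemma iint_lin d (f g : pt d -> R) c js x : contR f -> contR g ->
  iint js (fun z => f z + c * g z) x = iint js f x + c * iint js g x.
Proof.
move=> Hf Hg; elim: js x => [//|j js IH] x /=.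
have Cf := iint_cont js Hf. have Cg := iint_cont js Hg.
have -> : (fun t => iint js (fun z => f z + c * g z) (upd x j t)) =
   (fun t => plus (iint js f (upd x j t)) (scal c (iint js g (upd x j t)))).
  apply: functional_extensionality => t; by rewrite IH.
rewrite !RI_RInt; try exact: ex_RInt_line.
- rewrite RInt_plus; first rewrite RInt_scal //.
  + exact: ex_RInt_line.
  + exact: ex_RInt_line.
  + apply: ex_RInt_scal; exact: ex_RInt_line.
- apply: ex_RInt_plus; first exact: ex_RInt_line.
  apply: ex_RInt_scal; exact: ex_RInt_line.
Qed.

Lemma iint_mono d (f g : pt d -> R) js x : contR f -> contR g ->
  (forall z, f z <= g z) -> iint js f x <= iint js g x.
Proof.
move=> Hf Hg H; elim: js x => [|j js IH] x /=; first exact: H.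
have Cf := iint_cont js Hf. have Cg := iint_cont js Hg.
rewrite !RI_RInt; try exact: ex_RInt_line.
apply: RInt_le; try exact: ex_RInt_line; first lra.
move=> t _; exact: IH.
Qed.

Lemma RI_zero a b : RI (fun _ => 0) a b = 0.
Proof.
rewrite RI_RInt; last exact: ex_RInt_const.
rewrite RInt_const; rewrite /scal /= /mult /=; ring.
Qed.

Lemma iint_local d (f : pt d -> R) js x :
  (forall z, (forall i, i \notin js -> z i = x i) -> f z = 0) -> iint js f x = 0.
Proof.
elim: js x => [|j js IH] x H /=; first by apply: H.
have -> : (fun t => iint js f (upd x j t)) = (fun _ => 0).
  apply: functional_extensionality => t; apply: IH => z Hz; apply: H => i Hi.
  move: Hi; rewrite in_cons negb_or => /andP [Hij Hi].
  rewrite Hz // /upd (negbTE Hij) //.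
exact: RI_zero.
Qed.

Lemma RInt_Chasles_R (f : R -> R) a b c : ex_RInt f a b -> ex_RInt f b c ->
  RInt f a b + RInt f b c = RInt f a c.
Proof. move=> H1 H2; exact: (RInt_Chasles f a b c H1 H2). Qed.

Lemma RInt_zero_R (f : R -> R) a b : (forall x, Rmin a b < x < Rmax a b -> f x = 0) -> RInt f a b = 0.
Proof.
move=> H; rewrite (RInt_ext f (fun _ => 0)) //.
rewrite RInt_const /scal /= /mult /=; ring.
Qed.

Lemma RInt_scal_R (f : R -> R) a b c : ex_RInt f a b -> RInt (fun t => c * f t) a b = c * RInt f a b.
Proof. move=> H; exact: (RInt_scal f a b c H). Qed.

Lemma cont1_comp_div (g : R -> R) eps : 0 < eps -> ct1 g -> ct1 (fun t => g (t / eps)).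
Proof.
move=> He Hg a e Hepos.
case: (Hg (a / eps) e Hepos) => del [Hd H].
exists (del * eps); split; first nra.
move=> b Hb; apply: H.
have -> : b / eps - a / eps = (b - a) / eps by field; lra.
rewrite Rabs_div; last lra.
rewrite (Rabs_pos_eq eps); last lra.
apply/Rlt_div_l => //.
Qed.

Lemma ex_RInt_cont1 (g : R -> R) a b : ct1 g -> ex_RInt g a b.
Proof.
move=> Hg; apply: ex_RInt_continuous => z _; apply: cont1_continuous => e He; exact: Hg z e He.
Qed.

Lemma iint_scale d (phi : pt d -> R) (eps : R) : contR phi -> 0 < eps <= 1 ->
  (forall z j, 1 < Rabs (z j) -> phi z = 0) ->
  forall js x, uniq js ->
  iint js (fun y => phi (fun i => y i / eps)) x = eps ^ (size js) * iint js phi (fun i => x i / eps).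
Proof.
move=> Hphi Heps Hsupp; elim => [|j js IH] x /=.
  move=> _; ring.
move=> /andP [Hj Hu].
set x' := fun i => x i / eps.
set G := fun s => iint js phi (upd x' j s).
have CG : ct1 G by apply: contR_line; exact: iint_cont.
have -> : (fun t => iint js (fun y => phi (fun i => y i / eps)) (upd x j t)) =
          (fun t => eps ^ size js * G (t / eps)).
  apply: functional_extensionality => t; rewrite IH //; congr (_ * _).
  rewrite /G; congr (iint _ _ _); apply: functional_extensionality => i.
  by rewrite /upd /x'; case: (i == j).
change (RI (fun t => eps ^ size js * G (t / eps)) (-1) 1 = eps * eps ^ size js * RI G (-1) 1).
have CG' := cont1_comp_div (proj1 Heps) CG.
have CG'' : ct1 (fun t => eps ^ size js * G (t / eps)).
  move=> a e He.
  case: (CG' a (e / (Rabs (eps ^ size js) + 1))) => [|del [Hd H]].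
    apply: Rdiv_lt_0_compat => //; have := Rabs_pos (eps ^ size js); lra.
  exists del; split => // b Hb; rewrite -Rmult_minus_distr_l Rabs_mult.
  have := H b Hb; have := Rabs_pos (eps ^ size js); have := Rabs_pos (G (b / eps) - G (a / eps)).
  set q := e / (Rabs (eps ^ size js) + 1).
  have Eq : (Rabs (eps ^ size js) + 1) * q = e by rewrite /q; field; have := Rabs_pos (eps ^ size js); lra.
  nra.
rewrite !RI_RInt; try exact: ex_RInt_cont1.
have HG0 : forall s, 1 < Rabs s -> G s = 0.
  move=> s Hs; rewrite /G; apply: iint_local => z Hz; apply: (Hsupp z j).
  by rewrite (Hz j Hj) /upd eqxx.
have Hinv : 1 <= / eps.
  rewrite -Rinv_1; apply: Rinv_le_contravar; lra.
rewrite RInt_scal_R; last exact: ex_RInt_cont1.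
have H1 : RInt (fun t => G (t / eps)) (-1) 1 = eps * RInt G (- / eps) (/ eps).
  have Hc := RInt_comp_lin G (/ eps) 0 (-1) 1 (ex_RInt_cont1 _ _ CG).
  have E1 : RInt (fun y => scal (/ eps) (G (/ eps * y + 0))) (-1) 1 = / eps * RInt (fun t => G (t / eps)) (-1) 1.
    rewrite -RInt_scal_R; last exact: ex_RInt_cont1.
    apply: RInt_ext => t _; rewrite /scal /= /mult /=; congr (_ * G _); rewrite /Rdiv; ring.
  rewrite E1 in Hc.
  have E2 : / eps * -1 + 0 = - / eps by ring.
  have E3 : / eps * 1 + 0 = / eps by ring.
  rewrite E2 E3 in Hc; rewrite -Hc -Rmult_assoc Rinv_r ?Rmult_1_l //; lra.
have H2 : RInt G (- / eps) (/ eps) = RInt G (-1) 1.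
  rewrite -(RInt_Chasles_R (b := -1)); try exact: ex_RInt_cont1.
  rewrite -(RInt_Chasles_R (a := -1) (b := 1)); try exact: ex_RInt_cont1.
  rewrite (RInt_zero_R (f := G) (a := - / eps)).
    rewrite (RInt_zero_R (f := G) (a := 1)); first by rewrite Rplus_0_l Rplus_0_r.
    move=> t; rewrite Rmin_left ?Rmax_right; try lra.
    move=> Ht; apply: HG0; rewrite Rabs_pos_eq; lra.
  move=> t; rewrite Rmin_left ?Rmax_right; try lra.
  move=> Ht; apply: HG0; rewrite Rabs_left; lra.
rewrite H1 H2; ring.
Qed.


Lemma norm1_vsub_le2 d (a b : pt d) : norm1 (vsub a b) <= norm1 a + norm1 b.
Proof.
have H := norm1_add a (fun j => - b j).
have E1 : norm1 (vsub a b) = norm1 (fun j => a j + - b j) by apply: norm1_ext => j; rewrite /vsub.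
have E2 : norm1 (fun j => - b j) = norm1 b by apply: eq_bigr => j _; exact: Rabs_Ropp.
lra.
Qed.

Section Moll.
Variables (d : nat) (phi : pt d -> R).
Hypothesis Hm : mollifier phi.

Lemma phi_cont : contR phi.
Proof. by case: Hm => /(_ 0%N) [] . Qed.

Lemma phi_supp z j : 1 < Rabs (z j) -> phi z = 0.
Proof.
move=> H; apply: NNPP => Hn.
case: Hm => _ [_ [Hs _]].
have := Hs z Hn; have := coord_le_norm2 z j; lra.
Qed.

Variable eps : R.
Hypothesis Heps : 0 < eps < 1.

Definition pe := phi_eps phi eps.

Lemma epsd_pos : 0 < eps ^ d.
Proof. apply: pow_lt; lra. Qed.

Lemma pe_cont : contR pe.
Proof.
rewrite /pe /phi_eps; apply: contR_mult; first exact: contR_const.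
apply: (contR_precomp (L := / eps) phi_cont).
- apply: Rinv_0_lt_compat; lra.
- move=> x y; rewrite -big_Rscal; apply: Req_le; apply: eq_bigr => j _.
  rewrite /vsub.
  have -> : y j / eps - x j / eps = / eps * (y j - x j) by rewrite /Rdiv; ring.
  rewrite Rabs_mult Rabs_pos_eq //; apply: Rlt_le; apply: Rinv_0_lt_compat; lra.
Qed.

Lemma pe_ge0 z : 0 <= pe z.
Proof.
rewrite /pe /phi_eps; apply: Rmult_le_pos.
- apply: Rlt_le; apply: Rinv_0_lt_compat; exact: epsd_pos.
- by case: Hm => _ [H _].
Qed.

Lemma pe_supp z : pe z <> 0 -> forall j, Rabs (z j) <= eps.
Proof.
move=> H j; apply: Rnot_lt_le => Hlt; apply: H.
rewrite /pe /phi_eps (@phi_supp _ j); first ring.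
rewrite Rabs_div; last lra.
rewrite (Rabs_pos_eq eps); last lra.
apply/Rlt_div_r; lra.
Qed.

Lemma box_lin (f g : pt d -> R) c : contR f -> contR g ->
  box_int (fun z => f z + c * g z) = box_int f + c * box_int g.
Proof. move=> Hf Hg; exact: iint_lin. Qed.

Lemma box_mono (f g : pt d -> R) : contR f -> contR g -> (forall z, f z <= g z) ->
  box_int f <= box_int g.
Proof. move=> Hf Hg H; exact: iint_mono. Qed.

Lemma box_zero : box_int (fun _ : pt d => 0) = 0.
Proof. by apply: iint_local. Qed.

Lemma box_scal (g : pt d -> R) c : contR g -> box_int (fun z => c * g z) = c * box_int g.
Proof.
move=> Hg.
have -> : box_int (fun z => c * g z) = box_int (fun z => 0 + c * g z) by apply: iint_ext => z; ring.
rewrite (box_lin _ (contR_const 0) Hg) box_zero; ring.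
Qed.

Lemma pe_one : box_int pe = 1.
Proof.
rewrite /pe /phi_eps box_scal; last first.
  apply: (contR_precomp (L := / eps) phi_cont).
  - apply: Rinv_0_lt_compat; lra.
  - move=> x y; rewrite -big_Rscal; apply: Req_le; apply: eq_bigr => j _.
    rewrite /vsub.
    have -> : y j / eps - x j / eps = / eps * (y j - x j) by rewrite /Rdiv; ring.
    rewrite Rabs_mult Rabs_pos_eq //; apply: Rlt_le; apply: Rinv_0_lt_compat; lra.
rewrite /box_int iint_scale; first last.
- exact: enum_uniq.
- move=> z j; exact: phi_supp.
- lra.
- exact: phi_cont.
rewrite size_enum_ord.
have -> : (fun i : 'I_d => 0 / eps) = (fun _ => 0).
  apply: functional_extensionality => i; rewrite /Rdiv; ring.
have -> : iint (enum 'I_d) phi (fun _ => 0) = 1 by case: Hm => _ [_ [_ H]].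
have := epsd_pos; move=> Hp; field; lra.
Qed.

Lemma box_bound (F : pt d -> R) c : contR F -> (forall z, Rabs (F z) <= c * pe z) ->
  Rabs (box_int F) <= c.
Proof.
move=> HF H.
have Hc1 : box_int (fun z => c * pe z) = c by rewrite box_scal ?pe_one; [ring | exact: pe_cont].
have Hc2 : box_int (fun z => (- c) * pe z) = - c by rewrite box_scal ?pe_one; [ring | exact: pe_cont].
have Cp : contR (fun z => c * pe z) by apply: contR_mult; [exact: contR_const | exact: pe_cont].
have Cm : contR (fun z => (- c) * pe z) by apply: contR_mult; [exact: contR_const | exact: pe_cont].
have U := box_mono HF Cp (fun z => Rle_trans _ _ _ (Rle_abs _) (H z)).
have L : box_int (fun z => (- c) * pe z) <= box_int F.
  apply: box_mono => // z; have := H z; have := Rabs_pos (F z).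
  move/Rabs_le_between: (H z) => [A B] _ _; lra.
apply: Rabs_le; lra.
Qed.

End Moll.



Lemma contR_shift d (f : pt d -> R) x : contR f -> contR (fun z => f (vsub x z)).
Proof.
move=> Hf; apply: (contR_precomp (L := 1) Hf); first lra.
move=> a b; rewrite Rmult_1_l; apply: Req_le; rewrite norm1_sym; apply: norm1_ext => j.
rewrite /vsub; ring.
Qed.

Lemma norm1_small d (z : pt d) e : (forall j, Rabs (z j) <= e) -> norm1 z <= INR d * e.
Proof. exact: norm1_bound. Qed.

Lemma beps_Cb d rho (b : pt d -> pt d) phi eps :
  Cb rho b -> mollifier phi -> 0 < eps < 1 -> Cb rho (b_eps phi b eps).
Proof.
move=> [Hbc Hbi] Hm Heps.
have Cpe := pe_cont Hm Heps.
have CI : forall x j, contR (fun z => b (vsub x z) j * phi_eps phi eps z).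
  move=> x j; apply: (contR_mult (f := fun z => b (vsub x z) j) (g := phi_eps phi eps)) => //.
  apply: (contR_shift (f := fun z => b z j)); exact: Hbc.
split.
- move=> j x e He.
  case: (heine (Hbc j) (norm1 x + 1 + INR d) (e := e / 2)) => [|del [Hdel H]]; first lra.
  exists (Rmin del 1); split; first by apply: Rmin_pos; lra.
  move=> y Hy.
  have E : b_eps phi b eps y j - b_eps phi b eps x j =
    box_int (fun z => b (vsub y z) j * phi_eps phi eps z + (-1) * (b (vsub x z) j * phi_eps phi eps z)).
    rewrite box_lin //; rewrite /b_eps; ring.
  rewrite E; apply: (Rle_lt_trans _ (e / 2)); [|lra].
  apply: (box_bound Hm Heps); first by apply: contR_plus => //; apply: contR_mult => //; exact: contR_const.
  move=> z.
  have -> : b (vsub y z) j * phi_eps phi eps z + -1 * (b (vsub x z) j * phi_eps phi eps z)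
     = (b (vsub y z) j - b (vsub x z) j) * phi_eps phi eps z by ring.
  rewrite Rabs_mult (Rabs_pos_eq (phi_eps _ _ _)); last exact: (pe_ge0 Hm Heps).
  have Hpe := pe_ge0 Hm Heps z.
  case: (Req_dec (phi_eps phi eps z) 0) => Hz.
    rewrite /pe Hz !Rmult_0_r; lra.
  have Hzs := pe_supp Hm Heps Hz.
  have Nz : norm1 z <= INR d by rewrite -(Rmult_1_r (INR d)); apply: norm1_bound => i; have := Hzs i; lra.
  have Hy1 : norm1 y <= norm1 x + 1.
    have := norm1_vsub_le y x; have := Rmin_r del 1; lra.
  apply: Rmult_le_compat_r => //; apply: Rlt_le; apply: H.
  + have := norm1_vsub_le2 y z; lra.
  + have := norm1_vsub_le2 x z; lra.
  + have -> : norm1 (vsub (vsub y z) (vsub x z)) = norm1 (vsub y x).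
      by apply: norm1_ext => i; rewrite /vsub; ring.
    apply: Rlt_le_trans Hy (Rmin_l _ _).
- move=> x y j.
  have E : b_eps phi b eps x j - b_eps phi b eps y j =
    box_int (fun z => b (vsub x z) j * phi_eps phi eps z + (-1) * (b (vsub y z) j * phi_eps phi eps z)).
    rewrite box_lin //; rewrite /b_eps; ring.
  have CD : contR (fun z => b (vsub x z) j * phi_eps phi eps z + (-1) * (b (vsub y z) j * phi_eps phi eps z)).
    by apply: contR_plus => //; apply: contR_mult => //; exact: contR_const.
  rewrite E.
  have E2 : (x j - y j) * box_int (fun z => b (vsub x z) j * phi_eps phi eps z + (-1) * (b (vsub y z) j * phi_eps phi eps z))
    = box_int (fun z => 0 + (x j - y j) * (b (vsub x z) j * phi_eps phi eps z + (-1) * (b (vsub y z) j * phi_eps phi eps z))).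
    rewrite [X in _ = X]box_lin //; last exact: contR_const. rewrite (box_zero d); ring.
  rewrite E2.
  have E3 : Rabs (x j - y j) * rho (norm1 (vsub x y)) =
    box_int (fun z => 0 + (Rabs (x j - y j) * rho (norm1 (vsub x y))) * phi_eps phi eps z).
    rewrite box_lin //; [|exact: contR_const].
    rewrite (box_zero d) -/(pe phi eps) (pe_one Hm Heps); ring.
  rewrite E3; apply: box_mono.
  + apply: contR_plus; first exact: contR_const.
    apply: contR_mult; first exact: contR_const. exact: CD.
  + apply: contR_plus; first exact: contR_const.
    apply: contR_mult; first exact: contR_const. exact: Cpe.
  + move=> z.
    have Hpe := pe_ge0 Hm Heps z.
    have Hi := Hbi (vsub x z) (vsub y z) j.
    have E4 : norm1 (vsub (vsub x z) (vsub y z)) = norm1 (vsub x y).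
      by apply: norm1_ext => i; rewrite /vsub; ring.
    have E5 : vsub x z j - vsub y z j = x j - y j by rewrite /vsub; ring.
    rewrite E4 E5 in Hi.
    rewrite /pe in Hpe.
    have : (x j - y j) * (b (vsub x z) j - b (vsub y z) j) * phi_eps phi eps z <=
           Rabs (x j - y j) * rho (norm1 (vsub x y)) * phi_eps phi eps z.
      by apply: Rmult_le_compat_r.
    lra.
Qed.

Lemma beps_conv d rho (b : pt d -> pt d) phi : Cb rho b -> mollifier phi ->
  forall M e, 0 < e -> exists del, 0 < del /\ forall eps, 0 < eps < del -> eps < 1 ->
    forall x, norm1 x <= M -> forall j, Rabs (b_eps phi b eps x j - b x j) <= e.
Proof.
move=> [Hbc _] Hm M e He.
have Hd0 := pos_INR d.
case: (fc_pos (P := fun j del => forall eps, 0 < eps < del -> eps < 1 ->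
    forall x, norm1 x <= M -> Rabs (b_eps phi b eps x j - b x j) <= e)).
- move=> j del del' [Hd' Hle] H eps Heps Heps1; apply: H => //; lra.
- move=> j.
  case: (heine (Hbc j) (M + INR d) He) => del [Hdel H].
  exists (del / (INR d + 1)); split; first by apply: Rdiv_lt_0_compat => //; lra.
  move=> eps Heps Heps1 x Hx.
  have Heps' : 0 < eps < 1 by lra.
  have Cpe := pe_cont Hm Heps'.
  have Cb1 : contR (fun z => b (vsub x z) j * phi_eps phi eps z).
    apply: (contR_mult (f := fun z => b (vsub x z) j) (g := phi_eps phi eps)) => //.
    apply: (contR_shift (f := fun z => b z j)); exact: Hbc.
  have E : b_eps phi b eps x j - b x j =
      box_int (fun z => b (vsub x z) j * phi_eps phi eps z + (- b x j) * phi_eps phi eps z).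
    have P1 := pe_one Hm Heps'; rewrite /pe in P1; rewrite box_lin // P1 /b_eps; ring.
  rewrite E; apply: (box_bound Hm Heps').
    apply: contR_plus => //; apply: contR_mult => //; exact: contR_const.
  move=> z.
  have -> : b (vsub x z) j * phi_eps phi eps z + - b x j * phi_eps phi eps z
     = (b (vsub x z) j - b x j) * phi_eps phi eps z by ring.
  rewrite Rabs_mult (Rabs_pos_eq (phi_eps _ _ _)); last exact: (pe_ge0 Hm Heps').
  have Hpe := pe_ge0 Hm Heps' z.
  case: (Req_dec (phi_eps phi eps z) 0) => Hz.
    rewrite /pe Hz !Rmult_0_r; lra.
  have Hzs := pe_supp Hm Heps' Hz.
  have Nz : norm1 z <= INR d * eps by apply: norm1_bound.
  have Nz2 : INR d * eps < del.
    have : (INR d + 1) * eps < del.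
      have -> : del = (INR d + 1) * (del / (INR d + 1)) by field; lra.
      apply: Rmult_lt_compat_l; lra.
    nra.
  have Nz3 : INR d * eps <= INR d by nra.
  apply: Rmult_le_compat_r => //; apply: Rlt_le; apply: H.
  + have := norm1_vsub_le2 x z; lra.
  + have := norm1_ge0 z; lra.
  + have -> : norm1 (vsub (vsub x z) x) = norm1 z.
      by apply: eq_bigr => i _; rewrite /vsub (_ : x i - z i - x i = - z i); [exact: Rabs_Ropp | ring].
    lra.
- move=> del [Hdel H]; exists del; split => // eps Heps Heps1 x Hx j; exact: H.
Qed.

Lemma RInt_ub_const (f : R -> R) a b M : a <= b -> ex_RInt f a b ->
  (forall x, a < x < b -> f x <= M) -> RInt f a b <= (b - a) * M.
Proof.
move=> Hab Hf H.
have := RInt_le f (fun _ => M) a b Hab Hf (ex_RInt_const a b M) H.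
by rewrite RInt_const /scal /= /mult /=.
Qed.

Lemma RInt_lb_const (f : R -> R) a b M : a <= b -> ex_RInt f a b ->
  (forall x, a < x < b -> M <= f x) -> (b - a) * M <= RInt f a b.
Proof.
move=> Hab Hf H.
have := RInt_le (fun _ => M) f a b Hab (ex_RInt_const a b M) Hf H.
by rewrite RInt_const /scal /= /mult /=.
Qed.

Lemma lub_approx (E : R -> Prop) m : is_lub E m -> forall k, 0 < k ->
  exists r, E r /\ m - k < r /\ r <= m.
Proof.
move=> [Hub Hl] k Hk; apply: NNPP => Hn.
have : m <= m - k.
  apply: Hl => r Er; apply: Rnot_lt_le => Hr; apply: Hn; exists r; split => //; split => //.
  exact: Hub.
lra.
Qed.

Lemma le_eps_bound x y : (forall k, 0 < k -> x <= y + k) -> x <= y.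
Proof.
move=> H; apply: Rnot_lt_le => Hlt; have := H ((x - y) / 2); lra.
Qed.

Lemma sign_pos (Z g : R -> R) a c K B :
  a <= c -> 0 <= K -> 0 <= B ->
  (forall p q, a <= p -> p <= q -> q <= c -> ex_RInt g p q /\ Z q - Z p = RInt g p q) ->
  (forall p q, a <= p <= c -> a <= q <= c -> Rabs (Z q - Z p) <= B * Rabs (q - p)) ->
  (forall r, a <= r <= c -> 0 < Z r -> g r <= K) ->
  0 < Z c -> Z c - Rabs (Z a) <= (c - a) * K.
Proof.
move=> Hac HK HB Hint HL Hg Hc.
pose E := fun r => a <= r <= c /\ (r = a \/ Z r <= 0).
have Ea : E a by split; [lra | left].
have bE : bound E by exists c => r [[_ ?] _].
case: (completeness E bE (ex_intro _ a Ea)) => m Hm.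
have Ham : a <= m by apply: (proj1 Hm).
have Hmc : m <= c by apply: (proj2 Hm) => r [[_ ?] _].
have C1 : forall r, m < r <= c -> 0 < Z r.
  move=> r Hr; apply: Rnot_le_lt => Hz.
  have : r <= m by apply: (proj1 Hm); split; [lra | right].
  lra.
have C2 : m = a \/ Z m <= 0.
  case: (Req_dec m a) => Hma; [by left | right].
  apply: Rnot_lt_le => Hzm.
  have Hk : 0 < Rmin (m - a) (Z m / (B + 1)).
    apply: Rmin_pos; first lra. apply: Rdiv_lt_0_compat; lra.
  case: (lub_approx Hm Hk) => r [[Er Hr] [Hr1 Hr2]].
  have Hra : a < r by have := Rmin_l (m - a) (Z m / (B + 1)); lra.
  case: Hr => [Hra' | Hzr]; first lra.
  have := HL r m (ltac:(lra)) (ltac:(lra)).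
  rewrite (Rabs_pos_eq (m - r)); last lra.
  have : m - r < Z m / (B + 1) by have := Rmin_r (m - a) (Z m / (B + 1)); lra.
  move=> H1 H2.
  have : B * (m - r) <= B * (Z m / (B + 1)) by apply: Rmult_le_compat_l; lra.
  have : B * (Z m / (B + 1)) < Z m.
    have -> : B * (Z m / (B + 1)) = Z m * (B / (B + 1)) by field; lra.
    have : B / (B + 1) < 1 by apply/Rlt_div_l; lra.
    nra.
  move/Rabs_le_between: H2; lra.
have Step : Z c - Rabs (Z a) <= Z c - Z m.
  case: C2 => [-> | Hzm]; first by have := Rle_abs (Z a); lra.
  have := Rabs_pos (Z a); lra.
apply: Rle_trans Step _.
case: (Hint m c Ham Hmc (Rle_refl c)) => Hex ->.
apply: Rle_trans (RInt_ub_const (M := K) Hmc Hex _) _.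
  move=> x Hx; apply: Hg; [lra | apply: C1; lra].
apply: Rmult_le_compat_r => //; lra.
Qed.

Lemma sign_lemma (Z g : R -> R) a c K B :
  a <= c -> 0 <= K -> 0 <= B ->
  (forall p q, a <= p -> p <= q -> q <= c -> ex_RInt g p q /\ Z q - Z p = RInt g p q) ->
  (forall p q, a <= p <= c -> a <= q <= c -> Rabs (Z q - Z p) <= B * Rabs (q - p)) ->
  (forall r, a <= r <= c -> 0 < Z r -> g r <= K) ->
  (forall r, a <= r <= c -> Z r < 0 -> - g r <= K) ->
  Rabs (Z c) - Rabs (Z a) <= (c - a) * K.
Proof.
move=> Hac HK HB Hint HL Hp Hn.
case: (Rtotal_order (Z c) 0) => [Hc | [Hc | Hc]].
- have := @sign_pos (fun r => - Z r) (fun r => - g r) a c K B Hac HK HB.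
  move=> H; rewrite (Rabs_left (Z c)) // -(Rabs_Ropp (Z a)); apply: H.
  + move=> p q Hp1 Hpq Hq; case: (Hint p q Hp1 Hpq Hq) => Hex E; split.
    * exact: (ex_RInt_opp g p q Hex).
    * have := RInt_opp g p q Hex; rewrite /opp /=.
      move=> ->; lra.
  + move=> p q Hp1 Hq1; have := HL p q Hp1 Hq1.
    by rewrite (_ : - Z q - - Z p = - (Z q - Z p)) ?Rabs_Ropp //; ring.
  + move=> r Hr Hz; apply: Hn => //; lra.
  + lra.
- rewrite Hc Rabs_R0; have := Rabs_pos (Z a); nra.
- rewrite (Rabs_pos_eq (Z c)); last lra.
  by apply: (@sign_pos Z g a c K B).
Qed.

Lemma local_global (h : R -> R) a c L B : a <= c -> 0 <= B ->
  (forall p q, a <= p <= c -> a <= q <= c -> Rabs (h q - h p) <= B * Rabs (q - p)) ->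
  (forall s, a <= s < c -> exists k0, 0 < k0 /\ forall k, 0 < k < k0 -> s + k <= c -> h (s + k) - h s <= L * k) ->
  h c - h a <= L * (c - a).
Proof.
move=> Hac HB HL Hloc.
pose E := fun s => a <= s <= c /\ h s - h a <= L * (s - a).
have Ea : E a by split; [lra | rewrite !Rminus_eq_0; lra].
have bE : bound E by exists c => r [[_ ?] _].
case: (completeness E bE (ex_intro _ a Ea)) => m Hm.
have Ham : a <= m by apply: (proj1 Hm).
have Hmc : m <= c by apply: (proj2 Hm) => r [[_ ?] _].
have Em : E m.
  split; first lra.
  apply: le_eps_bound => k Hk.
  have Hk' : 0 < k / (B + Rabs L + 1) by apply: Rdiv_lt_0_compat => //; have := Rabs_pos L; lra.
  case: (lub_approx Hm Hk') => r [[Hr1 Hr2] [Hr3 Hr4]].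
  have := HL r m Hr1 (ltac:(lra)).
  rewrite (Rabs_pos_eq (m - r)); last lra.
  move=> H1.
  have HLa := Rle_abs L. have HLb := Rle_abs (- L). rewrite Rabs_Ropp in HLb.
  have : (B + Rabs L) * (m - r) <= k.
    have : (B + Rabs L) * (m - r) <= (B + Rabs L + 1) * (k / (B + Rabs L + 1)).
      apply: Rmult_le_compat; try lra; have := Rabs_pos L; lra.
    have -> : (B + Rabs L + 1) * (k / (B + Rabs L + 1)) = k by field; have := Rabs_pos L; lra.
    done.
  move/Rabs_le_between: H1 => H1.
  have : - L * (m - r) <= Rabs L * (m - r) by apply: Rmult_le_compat_r; lra.
  nra.
case: (Req_dec m c) => [Emc | Hne].
  by rewrite -Emc; case: Em.
case: (Hloc m (ltac:(lra))) => k0 [Hk0 H].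
have [k [Hk [Hk1 Hk2]]] : exists k, 0 < k /\ k < k0 /\ m + k <= c.
  exists (Rmin (k0 / 2) (c - m)); split; first by apply: Rmin_pos; lra.
  have := Rmin_l (k0 / 2) (c - m); have := Rmin_r (k0 / 2) (c - m); lra.
have := H k (conj Hk Hk1) Hk2.
case: Em => _ Hem H2.
have : m + k <= m.
  apply: (proj1 Hm); split; [lra | nra].
lra.
Qed.

Lemma cpt_eps (f : R -> R) x : continuity_pt f x -> forall e, 0 < e ->
  exists del, 0 < del /\ forall y, Rabs (y - x) < del -> Rabs (f y - f x) < e.
Proof.
move=> H e He; case: (H e He) => del [Hd H'].
exists del; split => // y Hy.
case: (Req_dec y x) => [-> | Hne]; first by rewrite Rminus_eq_0 Rabs_R0.
apply: H'; split => //; split => //; auto.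
Qed.

Section Bihari.
Variables (rho : R -> R).
Hypothesis HU : class_U rho.

Lemma rho_pos v : 0 < v -> 0 < rho v.
Proof. by case: HU => H _; apply: H. Qed.

Lemma rho_mono v w : 0 < v -> v <= w -> rho v <= rho w.
Proof. by case: HU => _ [_ [H _]]; apply: H. Qed.

Lemma rho_cont v : 0 < v -> continuity_pt rho v.
Proof. by case: HU => _ [H _]; apply: H. Qed.

Lemma ctI c v : 0 <= c -> 0 < v -> continuous (fun v => / (rho v + c)) v.
Proof.
move=> Hc Hv; apply/continuity_pt_filterlim.
have := @continuity_pt_inv (fun v => rho v + c) v.
apply.
- apply: (continuity_pt_plus rho (fun _ => c)); first exact: rho_cont.
  exact: continuity_pt_const.
- have := rho_pos Hv; lra.
Qed.

Lemma ctI0 v : 0 < v -> continuous (fun v => / rho v) v.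
Proof.
move=> Hv; apply/continuity_pt_filterlim.
apply: (continuity_pt_inv rho v); first exact: rho_cont.
have := rho_pos Hv; lra.
Qed.

Lemma exI c p q : 0 <= c -> 0 < p -> 0 < q -> ex_RInt (fun v => / (rho v + c)) p q.
Proof.
move=> Hc Hp Hq; apply: ex_RInt_continuous => z Hz; apply: ctI => //.
have := Rmin_glb_lt p q 0; have := Rmin_Rgt_r p q 0.
case: Hz => Hz _; have : 0 < Rmin p q by apply: Rmin_pos.
lra.
Qed.

Lemma exI0 p q : 0 < p -> 0 < q -> ex_RInt (fun v => / rho v) p q.
Proof.
move=> Hp Hq; apply: ex_RInt_continuous => z Hz; apply: ctI0.
case: Hz => Hz _; have : 0 < Rmin p q by apply: Rmin_pos.
lra.
Qed.

End Bihari.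

Lemma bihari rho D t : class_U rho -> 0 < D -> 0 <= t -> forall eta, 0 < eta -> exists d0, 0 < d0 /\
  forall (u : R -> R) B del, 0 <= del <= d0 -> 0 <= B -> u 0 = 0 ->
  (forall p q, 0 <= p <= t -> 0 <= q <= t -> Rabs (u q - u p) <= B * Rabs (q - p)) ->
  (forall a c m, 0 <= a -> a <= c -> c <= t -> 0 < m -> (forall r, a <= r <= c -> u r <= m) ->
       u c - u a <= D * (c - a) * (rho m + del)) ->
  forall s, 0 <= s <= t -> u s < eta.
Proof.
move=> HU HD Ht eta Heta.
have Hdiv : forall M, exists d0, 0 < d0 < 1 /\ forall del, 0 < del <= d0 -> M <= RI (fun s => / rho s) del 1.
  by case: HU => _ [_ [_ [_ H]]].
have [eta' [He1 [He2 He3]]] : exists eta', 0 < eta' /\ eta' <= eta /\ eta' <= 1/2.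
  exists (Rmin eta (1/2)); split; first by apply: Rmin_pos; lra.
  split; [exact: Rmin_l | exact: Rmin_r].
pose Kt := 4 * D * (t + 1) + 1.
case: (Hdiv (Kt + RInt (fun v => / rho v) eta' 1)) => d0' [[Hd0 Hd01] H0].
have [al [Hal [Hal1 Hal2]]] : exists al, 0 < al /\ al <= d0' /\ al < eta'.
  exists (Rmin d0' (eta' / 2)); split; first by apply: Rmin_pos; lra.
  split; first exact: Rmin_l.
  have := Rmin_r d0' (eta' / 2); lra.
have Ial : Kt <= RInt (fun v => / rho v) al eta'.
  have := H0 al (conj Hal Hal1).
  rewrite RI_RInt; last by apply: exI0 => //; lra.
  have C := @RInt_Chasles_R (fun v => / rho v) al eta' 1 (@exI0 rho HU al eta' Hal He1) (@exI0 rho HU eta' 1 He1 Rlt_0_1).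
  lra.
exists (rho al); split; first exact: rho_pos HU _ Hal.
move=> u B del [Hdel0 Hdel] HB Hu0 HL Hstar s Hs.
apply: Rnot_le_lt => Hus.
have Hus' : eta' <= u s by lra.
pose E := fun r => 0 <= r <= s /\ u r <= al.
have E0 : E 0 by split; [lra | rewrite Hu0; lra].
have bE : bound E by exists s => r [[_ ?] _].
case: (completeness E bE (ex_intro _ 0 E0)) => sg Hsg.
have Hsg0 : 0 <= sg by apply: (proj1 Hsg).
have Hsgs : sg <= s by apply: (proj2 Hsg) => r [[_ ?] _].
have Hugt : forall r, sg < r <= s -> al < u r.
  move=> r Hr; apply: Rnot_le_lt => Hle.
  have : r <= sg by apply: (proj1 Hsg); split; [lra | done].
  lra.
have Husg : u sg <= al.
  apply: le_eps_bound => k Hk.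
  have Hk' : 0 < k / (B + 1) by apply: Rdiv_lt_0_compat; lra.
  case: (lub_approx Hsg Hk') => r [[Hr1 Hr2] [Hr3 Hr4]].
  have := HL r sg (ltac:(lra)) (ltac:(lra)).
  rewrite (Rabs_pos_eq (sg - r)); last lra.
  have : B * (sg - r) <= k.
    have : B * (sg - r) <= (B + 1) * (k / (B + 1)) by apply: Rmult_le_compat; lra.
    have -> : (B + 1) * (k / (B + 1)) = k by field; lra.
    done.
  move=> H1 /Rabs_le_between H2; lra.
have Hsgs' : sg < s.
  case: (Req_dec sg s) => Heq; last lra.
  rewrite Heq in Husg; lra.
have Husg2 : al <= u sg.
  apply: le_eps_bound => k Hk.
  pose r := sg + Rmin (k / (B + 1)) (s - sg).
  have Hr0 : 0 < Rmin (k / (B + 1)) (s - sg) by apply: Rmin_pos; [apply: Rdiv_lt_0_compat|]; lra.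
  have Hr1 := Rmin_l (k / (B + 1)) (s - sg).
  have Hr2 := Rmin_r (k / (B + 1)) (s - sg).
  have := Hugt r (ltac:(rewrite /r; lra)).
  have := HL sg r (ltac:(lra)) (ltac:(rewrite /r; lra)).
  rewrite (Rabs_pos_eq (r - sg)); last (rewrite /r; lra).
  have : B * (r - sg) <= k.
    have : B * (r - sg) <= (B + 1) * (k / (B + 1)) by apply: Rmult_le_compat; rewrite /r; lra.
    have -> : (B + 1) * (k / (B + 1)) = k by field; lra.
    done.
  move=> H1 /Rabs_le_between H2; lra.
have Hge : forall r, sg <= r <= s -> al <= u r.
  move=> r [Hr1 Hr2]; case: (Req_dec r sg) => [-> // | Hne].
  apply: Rlt_le; apply: Hugt; lra.
pose f := fun v => / (rho v + del).
pose F := fun v => RInt f al v.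
have exf : forall p q, 0 < p -> 0 < q -> ex_RInt f p q by move=> p q Hp Hq; exact: exI.
have Fdiff : forall v1 v2, 0 < v1 -> 0 < v2 -> F v2 - F v1 = RInt f v1 v2.
  move=> v1 v2 H1 H2; rewrite /F -(RInt_Chasles_R (b := v1)); try apply: exf => //; lra.
have rhoal := rho_pos HU Hal.
have fpos : forall v, al <= v -> 0 < f v.
  move=> v Hv; apply: Rinv_0_lt_compat; have := rho_pos HU (ltac:(lra) : 0 < v); lra.
have fle : forall v w, al <= v -> v <= w -> f w <= / (rho v + del).
  move=> v w Hv Hw; apply: Rinv_le_contravar; first by have := rho_pos HU (ltac:(lra) : 0 < v); lra.
  have := rho_mono HU (ltac:(lra) : 0 < v) Hw; lra.
pose Cf := / rho al.
have HCf : 0 < Cf by apply: Rinv_0_lt_compat.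
have fleC : forall v, al <= v -> f v <= Cf.
  move=> v Hv; apply: Rle_trans (fle al v (Rle_refl _) Hv) _.
  apply: Rinv_le_contravar => //; lra.
have Flip : forall v1 v2, al <= v1 -> al <= v2 -> Rabs (F v2 - F v1) <= Cf * Rabs (v2 - v1).
  move=> v1 v2 H1 H2.
  wlog Hle : v1 v2 H1 H2 / v1 <= v2.
    move=> W; case: (Rle_dec v1 v2) => Hc; first exact: W.
    rewrite Rabs_minus_sym (Rabs_minus_sym v2); apply: W => //; lra.
  rewrite Fdiff; try lra.
  rewrite (Rabs_pos_eq (v2 - v1)); last lra.
  rewrite Rmult_comm; apply: abs_RInt_le_const => //; first by apply: exf; lra.
  move=> x Hx; rewrite Rabs_pos_eq; [apply: fleC; lra | apply: Rlt_le; apply: fpos; lra].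
have LG := @local_global (fun r => F (u r)) sg s (2 * D) (Cf * B) (Rlt_le _ _ Hsgs') (ltac:(nra)).
have LG2 : F (u s) - F (u sg) <= 2 * D * (s - sg).
  apply: LG.
  - move=> p q Hp Hq; apply: Rle_trans (Flip _ _ (Hge p Hp) (Hge q Hq)) _.
    rewrite Rmult_assoc; apply: Rmult_le_compat_l; first lra.
    apply: HL; lra.
  - move=> s0 Hs0.
    have Hv0 : al <= u s0 by apply: Hge; lra.
    have Hv0p : 0 < u s0 by lra.
    have rv0 := rho_pos HU Hv0p.
    case: (cpt_eps (rho_cont HU Hv0p) rv0) => th1 [Hth1 Hc].
    exists (th1 / 2 / (B + 1)); split; first by apply: Rdiv_lt_0_compat; lra.
    move=> k [Hk1 Hk2] Hk3.
    have HBk : B * k <= th1 / 2.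
      have : B * k <= (B + 1) * (th1 / 2 / (B + 1)) by apply: Rmult_le_compat; lra.
      have -> : (B + 1) * (th1 / 2 / (B + 1)) = th1 / 2 by field; lra.
      done.
    have Hbound : forall r, s0 <= r <= s0 + k -> u r <= u s0 + th1 / 2.
      move=> r Hr; have := HL s0 r (ltac:(lra)) (ltac:(lra)).
      rewrite (Rabs_pos_eq (r - s0)); last lra.
      move/Rabs_le_between => H1.
      have : B * (r - s0) <= B * k by apply: Rmult_le_compat_l; lra.
      lra.
    have Hst := Hstar s0 (s0 + k) (u s0 + th1 / 2) (ltac:(lra)) (ltac:(lra)) (ltac:(lra)) (ltac:(lra)) Hbound.
    have Hrho : rho (u s0 + th1 / 2) < 2 * rho (u s0).
      have := Hc (u s0 + th1 / 2); rewrite (_ : u s0 + th1 / 2 - u s0 = th1 / 2); last ring.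
      rewrite Rabs_pos_eq; last lra.
      move=> H1; have := H1 (ltac:(lra)); move/Rabs_def2 => [H2 H3]; lra.
    have Hinc : u (s0 + k) - u s0 <= 2 * D * k * (rho (u s0) + del).
      rewrite (_ : s0 + k - s0 = k) in Hst; last ring.
      have : D * k * (rho (u s0 + th1 / 2) + del) <= D * k * (2 * rho (u s0) + del).
        apply: Rmult_le_compat_l; [nra | lra].
      nra.
    have Hk0 : s0 + k <= s by lra.
    have Hvk : al <= u (s0 + k) by apply: Hge; lra.
    case: (Rle_dec (u (s0 + k)) (u s0)) => Hcase.
    + have := Fdiff (u (s0 + k)) (u s0) (ltac:(lra)) Hv0p.
      have : 0 * (u s0 - u (s0 + k)) <= RInt f (u (s0 + k)) (u s0).
        rewrite Rmult_comm; apply: RInt_lb_const => //; first by apply: exf; lra.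
        move=> x Hx; apply: Rlt_le; apply: fpos; lra.
      nra.
    + rewrite Fdiff; try lra.
      apply: Rle_trans (RInt_ub_const (M := / (rho (u s0) + del)) _ _ _) _.
      * lra.
      * apply: exf; lra.
      * move=> x Hx; apply: fle; lra.
      * have Hp : 0 < rho (u s0) + del by lra.
        have -> : 2 * D * k = 2 * D * k * (rho (u s0) + del) * / (rho (u s0) + del) by field; lra.
        apply: Rmult_le_compat_r; [apply: Rlt_le; exact: Rinv_0_lt_compat | lra].
have Husg3 : u sg = al by lra.
have F0 : F (u sg) = 0 by rewrite Husg3 /F RInt_point.
have F1 : F eta' <= F (u s).
  have := Fdiff eta' (u s) He1 (ltac:(lra)).
  have : 0 * (u s - eta') <= RInt f eta' (u s).
    rewrite Rmult_comm; apply: RInt_lb_const => //; first by apply: exf; lra.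
    move=> x Hx; apply: Rlt_le; apply: fpos; lra.
  lra.
have F2 : / 2 * RInt (fun v => / rho v) al eta' <= F eta'.
  rewrite -RInt_scal_R; last exact: exI0.
  rewrite /F; apply: RInt_le; first lra.
  - apply: ex_RInt_scal; exact: exI0.
  - apply: exf; lra.
  - move=> x Hx.
    have rx := rho_pos HU (ltac:(lra) : 0 < x).
    have := rho_mono HU Hal (ltac:(lra) : al <= x).
    move=> Hm.
    rewrite /f -Rinv_mult; apply: Rinv_le_contravar; lra.
have : s - sg <= t by lra.
rewrite /Kt in Ial.
nra.
Qed.

Lemma solves_RInt d (b : pt d -> pt d) x0 w ell X : solves b x0 w ell X ->
  forall s, 0 <= s -> forall j, ex_RInt (fun r => b (X r) j) 0 s /\
    X s j = x0 j + RInt (fun r => b (X r) j) 0 s + w j (ell j s).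
Proof.
move=> H s Hs j; case: (H s Hs j) => pr E; split.
- exact: (ex_RInt_Reals_1 _ _ _ pr).
- by rewrite (RInt_Reals _ _ _ pr).
Qed.

Lemma diff_rep d (b1 b2 : pt d -> pt d) x0 w ell X1 X2 :
  solves b1 x0 w ell X1 -> solves b2 x0 w ell X2 ->
  forall j p q, 0 <= p -> p <= q ->
    ex_RInt (fun r => b1 (X1 r) j - b2 (X2 r) j) p q /\
    (X1 q j - X2 q j) - (X1 p j - X2 p j) = RInt (fun r => b1 (X1 r) j - b2 (X2 r) j) p q.
Proof.
move=> H1 H2 j p q Hp Hpq.
case: (solves_RInt H1 (ltac:(lra) : 0 <= q) j) => Eq1 Xq1.
case: (solves_RInt H2 (ltac:(lra) : 0 <= q) j) => Eq2 Xq2.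
case: (solves_RInt H1 Hp j) => Ep1 Xp1.
case: (solves_RInt H2 Hp j) => Ep2 Xp2.
have G1 := ex_RInt_Chasles_2 _ 0 p q (conj Hp Hpq) Eq1.
have G2 := ex_RInt_Chasles_2 _ 0 p q (conj Hp Hpq) Eq2.
split; first exact: (ex_RInt_minus _ _ p q G1 G2).
rewrite (RInt_minus _ _ p q G1 G2) /minus /plus /opp /=.
have C1 := RInt_Chasles_R Ep1 G1.
have C2 := RInt_Chasles_R Ep2 G2.
rewrite Xq1 Xq2 Xp1 Xp2; lra.
Qed.

Lemma solves_zero d (b : pt d -> pt d) x0 w ell X : solves b x0 w ell X ->
  forall j, X 0 j = x0 j + w j (ell j 0).
Proof.
move=> H j; case: (solves_RInt H (Rle_refl 0) j) => _ ->.
rewrite RInt_point /zero /=; ring.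
Qed.

Lemma norm1_diff_abs d (x y : pt d) : Rabs (norm1 x - norm1 y) <= norm1 (vsub x y).
Proof.
apply: Rabs_le; split.
- have := norm1_vsub_le y x; rewrite norm1_sym; lra.
- have := norm1_vsub_le x y; lra.
Qed.

Lemma sum_bound d (Z : 'I_d -> R -> R) a c K :
  (forall j, Rabs (Z j c) - Rabs (Z j a) <= K) ->
  \big[Rplus/0]_(j < d) Rabs (Z j c) <= \big[Rplus/0]_(j < d) Rabs (Z j a) + INR d * K.
Proof.
move=> H.
have : \big[Rplus/0]_(j < d) Rabs (Z j c) <= \big[Rplus/0]_(j < d) (Rabs (Z j a) + K).
  apply: big_Rle => j; have := H j; lra.
by rewrite big_split /= big_Rconst.
Qed.

Lemma path_bound d (b : pt d -> pt d) x0 w ell X t : in_Sd ell -> bm_path w ->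
  solves b x0 w ell X -> 0 <= t -> exists M, forall s, 0 <= s <= t -> norm1 (X s) <= M.
Proof.
move=> HS Hw H Ht.
case: (fc_big (P := fun j M => forall s, 0 <= s <= t -> Rabs (X s j) <= M)).
- move=> j M M' HM H1 s Hs; apply: Rle_trans (H1 s Hs) HM.
- move=> j.
  case: (solves_RInt H Ht j) => Et _.
  case: (ex_RInt_ub _ 0 t Et) => Bj HBj.
  case: (HS j) => [Hl0 [Hlm _]].
  have HL0 : 0 <= ell j t by rewrite -Hl0; apply: Hlm; lra.
  pose g := fun v => Rabs (w j (Rmax 0 v)).
  case: (Hw j) => _ Hwc.
  case: (continuity_ab_maj g 0 (ell j t) HL0).
    move=> c Hc; apply: cont1_continuity_pt => e He.
    case: (Hwc c (proj1 Hc) e He) => del [Hdel Hd].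
    exists del; split => // b' Hb'.
    rewrite /g (Rmax_right 0 c); last lra.
    apply: Rle_lt_trans (Rabs_triang_inv2 _ _) _.
    apply: Hd; first exact: Rmax_l.
    apply: Rle_lt_trans _ Hb'.
    rewrite /Rmax; case: Rle_dec => Hb; first lra.
    rewrite Rminus_0_l Rabs_Ropp Rabs_pos_eq; last lra.
    rewrite Rabs_left1; lra.
  move=> Mx [HMx _].
  exists (Rabs (x0 j) + t * Rabs Bj + g Mx) => s Hs.
  case: (solves_RInt H (proj1 Hs) j) => Es ->.
  have I1 : Rabs (RInt (fun r => b (X r) j) 0 s) <= t * Rabs Bj.
    apply: Rle_trans (abs_RInt_le_const _ 0 s Bj (proj1 Hs) Es _) _.
      move=> r Hr; apply: (HBj r).
      rewrite Rmin_left ?Rmax_right; lra.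
    rewrite Rminus_0_r; apply: Rmult_le_compat; try lra.
      have := HBj 0; rewrite Rmin_left ?Rmax_right; try lra.
      move=> H0; have := H0 (ltac:(lra)); have := Rabs_pos (b (X 0) j).
      rewrite /norm /= /abs /=; lra.
    exact: Rle_abs.
  have I2 : Rabs (w j (ell j s)) <= g Mx.
    have Hls : 0 <= ell j s <= ell j t.
      split; [rewrite -Hl0; apply: Hlm; lra | apply: Hlm; lra].
    have := HMx (ell j s) Hls; rewrite /g (Rmax_right 0 (ell j s)) //; lra.
  have T1 := Rabs_triang (x0 j + RInt (fun r => b (X r) j) 0 s) (w j (ell j s)).
  have T2 := Rabs_triang (x0 j) (RInt (fun r => b (X r) j) 0 s).
  lra.
- move=> M HM; exists (INR d * M) => s Hs; apply: norm1_bound => j; exact: HM.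
Qed.

Unset Implicit Arguments.

Theorem lemma2p5 (d : nat) (rho : R -> R) (b : pt d -> pt d)
    (ell : 'I_d -> R -> R) (phi : pt d -> R) (w : 'I_d -> R -> R) (x0 : pt d) :
  class_U rho -> Cb rho b -> in_Sd ell -> mollifier phi -> bm_path w ->
  (forall eps, 0 < eps < 1 -> Cb rho (b_eps phi b eps)) /\
  (forall (Xe : R -> R -> pt d) (X : R -> pt d),
     (forall eps, 0 < eps < 1 -> solves (b_eps phi b eps) x0 w ell (Xe eps)) ->
     solves b x0 w ell X ->
     forall t, 0 <= t ->
       forall eta, 0 < eta -> exists del, 0 < del /\
         forall eps, 0 < eps < del -> eps < 1 ->
           norm2 (vsub (Xe eps t) (X t)) < eta).
Proof.
move=> HU HCb HS Hm Hw; split.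
  move=> eps Heps; exact: beps_Cb HCb Hm Heps.
move=> Xe X HXe HX t Ht eta Heta.
case: (path_bound HS Hw HX Ht) => MX HMX.
have HD : 0 < INR d + 1 by have := pos_INR d; lra.
case: (bihari HU HD Ht Heta) => d0 [Hd0 Hbi].
case: (beps_conv HCb Hm MX Hd0) => del [Hdel Hconv].
exists del; split => // eps Heps Heps1.
have Heps' : 0 < eps < 1 by lra.
have Hsol := HXe eps Heps'.
have CbE := beps_Cb HCb Hm Heps'.
pose Z := fun j r => Xe eps r j - X r j.
pose g := fun j r => b_eps phi b eps (Xe eps r) j - b (X r) j.
have Rep : forall j p q, 0 <= p -> p <= q -> ex_RInt (g j) p q /\ Z j q - Z j p = RInt (g j) p q.
  move=> j p q Hp Hpq; exact: (diff_rep Hsol HX j Hp Hpq).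
case: (fc_big (P := fun j B => 0 <= B /\ forall p q, 0 <= p <= t -> 0 <= q <= t ->
          Rabs (Z j q - Z j p) <= B * Rabs (q - p))).
- move=> j B B' HBB [HB H]; split; first lra.
  move=> p q Hp Hq; apply: Rle_trans (H p q Hp Hq) _.
  apply: Rmult_le_compat_r => //; exact: Rabs_pos.
- move=> j.
  case: (Rep j 0 t (Rle_refl 0) Ht) => Ex _.
  case: (ex_RInt_ub _ 0 t Ex) => Bj HBj.
  exists (Rabs Bj); split; first exact: Rabs_pos.
  move=> p q Hp Hq.
  wlog Hpq : p q Hp Hq / p <= q.
    move=> W; case: (Rle_dec p q) => Hc; first exact: W.
    rewrite Rabs_minus_sym (Rabs_minus_sym q); apply: W => //; lra.
  case: (Rep j p q (proj1 Hp) Hpq) => Ex2 ->.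
  rewrite (Rabs_pos_eq (q - p)); last lra.
  rewrite Rmult_comm; apply: Rle_trans (abs_RInt_le_const _ p q Bj Hpq Ex2 _) _.
    move=> r Hr; apply: HBj; rewrite Rmin_left ?Rmax_right; lra.
  apply: Rmult_le_compat_l; [lra | exact: Rle_abs].
move=> Bz0 HBz0.
pose Bz := Rmax 0 Bz0.
have HBz : 0 <= Bz by apply: Rmax_l.
have LZ : forall j p q, 0 <= p <= t -> 0 <= q <= t -> Rabs (Z j q - Z j p) <= Bz * Rabs (q - p).
  move=> j p q Hp Hq; apply: Rle_trans (proj2 (HBz0 j) p q Hp Hq) _.
  apply: Rmult_le_compat_r; [exact: Rabs_pos | exact: Rmax_r].
pose u := fun r => norm1 (vsub (Xe eps r) (X r)).
have Hu0 : u 0 = 0.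
  rewrite /u -[X in _ = X](norm1_zero d); apply: norm1_ext => j.
  rewrite /vsub /= (solves_zero Hsol) (solves_zero HX); ring.
have HLu : forall p q, 0 <= p <= t -> 0 <= q <= t -> Rabs (u q - u p) <= INR d * Bz * Rabs (q - p).
  move=> p q Hp Hq; apply: Rle_trans (norm1_diff_abs _ _) _.
  rewrite Rmult_assoc; apply: norm1_bound => j.
  exact: (LZ j p q Hp Hq).
have Hstar : forall a c m, 0 <= a -> a <= c -> c <= t -> 0 < m -> (forall r, a <= r <= c -> u r <= m) ->
    u c - u a <= (INR d + 1) * (c - a) * (rho m + d0).
  move=> a c m Ha Hac Hct Hm0 Hum.
  have Hrm := rho_pos HU Hm0.
  have HK : 0 <= rho m + d0 by lra.
  have Sj : forall j, Rabs (Z j c) - Rabs (Z j a) <= (c - a) * (rho m + d0).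
    move=> j; apply: (sign_lemma (B := Bz)) => //.
    - move=> p q Hp Hpq Hq; apply: Rep; lra.
    - move=> p q Hp Hq; apply: LZ; lra.
    - move=> r Hr Hz.
      have Hc := (proj2 CbE) (Xe eps r) (X r) j.
      rewrite Rabs_pos_eq in Hc; last (rewrite /Z in Hz; lra).
      have Hur : Z j r <= u r by apply: Rle_trans (Rle_abs _) (coord_le_norm1 (vsub (Xe eps r) (X r)) j).
      have Hrho := rho_mono HU (ltac:(lra) : 0 < u r) (Hum r Hr).
      have A1 : b_eps phi b eps (Xe eps r) j - b_eps phi b eps (X r) j <= rho (u r).
        apply: (Rmult_le_reg_l (Z j r)) => //; exact: Hc.
      have A2 := Hconv eps Heps Heps1 (X r) (HMX r (ltac:(lra))) j.
      move/Rabs_le_between: A2 => A2.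
      rewrite /g; lra.
    - move=> r Hr Hz.
      have Hc := (proj2 CbE) (Xe eps r) (X r) j.
      rewrite Rabs_left in Hc; last (rewrite /Z in Hz; lra).
      have Hur : - Z j r <= u r.
        apply: Rle_trans _ (coord_le_norm1 (vsub (Xe eps r) (X r)) j).
        rewrite -Rabs_Ropp; exact: Rle_abs.
      have Hrho := rho_mono HU (ltac:(lra) : 0 < u r) (Hum r Hr).
      have A1 : - (b_eps phi b eps (Xe eps r) j - b_eps phi b eps (X r) j) <= rho (u r).
        apply: (Rmult_le_reg_l (- Z j r)); first lra.
        rewrite (_ : - Z j r * - (b_eps phi b eps (Xe eps r) j - b_eps phi b eps (X r) j)
                   = Z j r * (b_eps phi b eps (Xe eps r) j - b_eps phi b eps (X r) j)); last ring.
        exact: Hc.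
      have A2 := Hconv eps Heps Heps1 (X r) (HMX r (ltac:(lra))) j.
      move/Rabs_le_between: A2 => A2.
      rewrite /g; lra.
  have := sum_bound Sj.
  rewrite -/(norm1 (vsub (Xe eps c) (X c))) -/(norm1 (vsub (Xe eps a) (X a))) -/(u c) -/(u a).
  have : 0 <= (c - a) * (rho m + d0) by apply: Rmult_le_pos; lra.
  nra.
have Hfin := Hbi u (INR d * Bz) d0 (conj (Rlt_le _ _ Hd0) (Rle_refl d0)) (ltac:(have := pos_INR d; nra)) Hu0 HLu Hstar t (conj Ht (Rle_refl t)).
apply: Rle_lt_trans (norm2_le_norm1 _) Hfin.
Qed.
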